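(* Let $n\ge2$ and consider a line (path) on $n$ nodes, where the node at position $i$ initially has integer load $i$. Run any matching-based integral load-balancing algorithm against the following adversary: the graph is always a path on the $n$ nodes; in each round, after each pair of adjacent nodes in the matching exchanges load, the adversary swaps the two nodes of that pair if necessary so that the lighter one is at the smaller position (no other changes). Let $a_t[i]$ be the load of the node at position $i$ of the path at time $t$ ($a_1[i]=i$) and $p_t^k=\sum_{j=1}^k a_t[j]$ (with $p_t^0=0$). Then for all $t\ge1$ and all $k\in\{0,1,\dots,n\}$, $p_t^k\le p_1^k$.
   Context: Integral load balancing: loads are non-negative integers that remain integers, total load preserved. A matching-based algorithm: in each round, the pairs of nodes exchanging load form a matching of the current graph, and each matched pair redistributes its combined load between its two nodes as integers; unmatched nodes keep their load. Nodes may exchange information with all their neighbours each round. *)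

(* Defs.v *)
(* Positions on the path are 0-indexed: position p (0 <= p < n)
   corresponds to the paper's position p+1. A configuration is a function
   nat -> nat giving the load at each position (values at positions >= n are
   irrelevant). *)
From mathcomp Require Import all_boot all_order.
Set Implicit Arguments. Unset Strict Implicit. Unset Printing Implicit Defensive.

(* A matching of the path on n nodes, encoded by the set M of left endpoints:
   i \in M means edge {i, i+1} is matched; edges must exist and be disjoint. *)
Definition path_matching (n : nat) (M : pred nat) : Prop :=
  forall i, M i -> i.+1 < n /\ ~~ M i.+1.

(* One round against the adversary: each matched pair (i, i+1) redistributes
   its combined load as integers (arbitrarily, as chosen by the algorithm),
   then the adversary places the lighter node at the smaller position;
   unmatched nodes keep their load. *)
Definition adversary_round (n : nat) (a a' : nat -> nat) : Prop :=
  exists M : pred nat, path_matching n M /\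
    (forall i, M i -> a' i + a' i.+1 = a i + a i.+1 /\ a' i <= a' i.+1) /\
    (forall j, j < n -> ~~ M j -> (forall i, M i -> i.+1 <> j) -> a' j = a j).

(* prefix sum p^k = a[1] + ... + a[k] (paper's 1-indexing) *)
Definition prefix_load (a : nat -> nat) (k : nat) : nat := \sum_(i < k) a i.

(* Main.v *)
Require Import Defs.
From mathcomp Require Import all_boot all_order.
From mathcomp Require Import zify.

Lemma pl_S (a : nat -> nat) k : prefix_load a k.+1 = prefix_load a k + a k.
Proof. by rewrite /prefix_load big_ord_recr. Qed.

Lemma pl_init n (a : nat -> nat) : (forall i, i < n -> a i = i.+1) ->
  forall k, k <= n -> (prefix_load a k).*2 = k * k.+1.
Proof.
move=> Ha; elim=> [|k IH] Hk; first by rewrite /prefix_load big_ord0.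
rewrite pl_S doubleD IH ?(ltnW Hk) // Ha //. lia.
Qed.

Lemma pl_eq n (a a' : nat -> nat) (M : pred nat) :
  path_matching n M ->
  (forall i, M i -> a' i + a' i.+1 = a i + a i.+1) ->
  (forall j, j < n -> ~~ M j -> (forall i, M i -> i.+1 <> j) -> a' j = a j) ->
  forall k, k <= n -> (0 < k -> ~~ M k.-1) -> prefix_load a' k = prefix_load a k.
Proof.
move=> HM Hs Hu k; elim: k {-2}k (leqnn k) => [|K IH] k Hk.
  by move: Hk; rewrite leqn0 => /eqP -> _ _; rewrite /prefix_load !big_ord0.
move=> Hkn Hnm; destruct k as [|k]; first by rewrite /prefix_load !big_ord0.
have Hnk : ~~ M k by exact: Hnm.
destruct k as [|k].
  by rewrite !pl_S /prefix_load !big_ord0 Hu //.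
case HMk: (M k).
  have [Hk1 _] := HM _ HMk.
  rewrite !pl_S IH; [| lia | lia |].
  - by rewrite -!addnA Hs.
  - destruct k as [|k]; first by []. move=> _ /=.
    apply/negP=> Mk; have [_ /negP] := HM _ Mk; by rewrite HMk.
rewrite pl_S [in RHS]pl_S (IH k.+1); [| lia | lia | by move=> _; exact: (negbT HMk)].
rewrite Hu //.
by move=> i Mi [] Ei; subst i; rewrite Mi in HMk.
Qed.

Lemma foo i : i * i.+1 + i.+2 * i.+3 = (i.+1 * i.+2).*2 + 2.
Proof. rewrite !mulSn !mulnS -!muln2. lia. Qed.

Lemma step n (a a' : nat -> nat) : adversary_round n a a' ->
  (forall k, k <= n -> (prefix_load a k).*2 <= k * k.+1) ->
  (forall k, k <= n -> (prefix_load a' k).*2 <= k * k.+1).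
Proof.
move=> [M [HM [Hm Hu]]] Hinv k Hk.
have Hs' : forall i, M i -> a' i + a' i.+1 = a i + a i.+1 by move=> j /Hm [].
case: k Hk => [|i] Hk; first by rewrite /prefix_load big_ord0.
case Mi: (M i); last first.
  by rewrite (pl_eq _ _ _ _ HM Hs' Hu _ Hk) ?Mi //; apply: Hinv.
have [Hi1 Hni] := HM _ Mi.
have [Hs Hle] := Hm _ Mi.
have E : prefix_load a' i = prefix_load a i.
  apply: (pl_eq _ _ _ _ HM Hs' Hu); first lia.
  destruct i as [|i]; first by []. move=> _ /=.
  apply/negP=> Mi'; have [_ /negP] := HM _ Mi'; by rewrite Mi.
have H1 := Hinv i (ltnW (ltnW Hi1)).
have H2 := Hinv i.+2 Hi1.
rewrite !pl_S in H2.
rewrite pl_S E.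
have Hev : ~~ odd (i.+1 * i.+2) by rewrite oddM /=; case: (odd i).
have := odd_double_half (i.+1 * i.+2).
rewrite (negbTE Hev) add0n => HX.
have Hid := foo i.
move: H1 H2 Hid HX Hs Hle.
move: (i * i.+1) (i.+2 * i.+3) (i.+1 * i.+2) (i.+1 * i.+2)./2 => A B C D.
lia.
Qed.

Theorem lemma4 (n : nat) (a : nat -> nat -> nat) :
  2 <= n ->
  (forall i, i < n -> a 1 i = i.+1) ->
  (forall t, 1 <= t -> adversary_round n (a t) (a t.+1)) ->
  forall t k, 1 <= t -> k <= n -> prefix_load (a t) k <= prefix_load (a 1) k.
Proof.
move=> _ H1 Hr t k Ht Hk.
have Hinv : forall t, 1 <= t -> forall k, k <= n -> (prefix_load (a t) k).*2 <= k * k.+1.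
  elim=> [|s IH] //= Hs.
  case: s IH Hs => [|s] IH Hs.
    by move=> k' Hk'; rewrite (pl_init _ _ H1 _ Hk').
  by apply: (step _ _ _ (Hr s.+1 _)) => //; apply: IH.
have := Hinv t Ht k Hk; rewrite -(pl_init _ _ H1 _ Hk) leq_double //.
Qed.
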